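(* Let $d$ be a positive square-free integer with $d\equiv 7\pmod 8$, $K=\mathbb{Q}[\sqrt{-d}]$ with ring of integers $\mathfrak{o}_K$, and $L=\mathbb{Q}[\sqrt{2d}]$ (where $2d$ is square-free) with ring of integers $\mathfrak{o}_L$. Let $\xi,\psi,\phi$ be pairwise distinct elements of $\{1,i,j,k\}$ and $p,m\in\mathbb{Z}$. Then the following are equivalent: (i) $u:=m\sqrt{-d}\,\xi+p\psi+(1-p)\phi\in\mathcal{U}(\mathbb{H}(\mathfrak{o}_K))$; (ii) $\epsilon:=(2p-1)+m\sqrt{2d}\in\mathcal{U}(\mathfrak{o}_L)$.
   Context: $\mathbb{H}(K)=\left(\frac{-1,-1}{K}\right)$ is the quaternion algebra over $K$ with $K$-basis $1,i,j,k$, $i^2=j^2=-1$, $k=ji=-ij$; $\mathbb{H}(\mathfrak{o}_K)$ is the set of $\mathfrak{o}_K$-linear combinations of $1,i,j,k$. *)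

(* Defs.v *)
From HB Require Import structures.
From mathcomp Require Import all_boot all_order all_algebra all_field.
Set Implicit Arguments. Unset Strict Implicit. Unset Printing Implicit Defensive.
Import Order.TTheory GRing.Theory Num.Theory.
Local Open Scope ring_scope.

Definition squarefree (n : nat) : Prop :=
  forall k : nat, (1 < k)%N -> ~~ (k * k %| n)%N.

Definition in_quad_field (r : int) (x : algC) : Prop :=
  exists a b : rat, x = ratr a + ratr b * sqrtC (r%:~R).

Definition in_ring_of_int (r : int) (x : algC) : Prop :=
  in_quad_field r x /\ x \in Aint.

Definition is_unit_oF (r : int) (x : algC) : Prop :=
  in_ring_of_int r x /\ exists y, in_ring_of_int r y /\ x * y = 1.

(* Quaternions a0 + a1 i + a2 j + a3 k over algC, with i^2 = j^2 = -1,
   k = j i = - i j. *)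
Record quat := Quat { q0 : algC; q1 : algC; q2 : algC; q3 : algC }.

Definition qadd (a b : quat) : quat :=
  Quat (q0 a + q0 b) (q1 a + q1 b) (q2 a + q2 b) (q3 a + q3 b).
Definition qscale (c : algC) (a : quat) : quat :=
  Quat (c * q0 a) (c * q1 a) (c * q2 a) (c * q3 a).
Definition qone : quat := Quat 1 0 0 0.

Definition qmul (a b : quat) : quat :=
  Quat (q0 a * q0 b - q1 a * q1 b - q2 a * q2 b - q3 a * q3 b)
       (q0 a * q1 b + q1 a * q0 b - q2 a * q3 b + q3 a * q2 b)
       (q0 a * q2 b + q2 a * q0 b + q1 a * q3 b - q3 a * q1 b)
       (q0 a * q3 b + q3 a * q0 b - q1 a * q2 b + q2 a * q1 b).

Definition qbasis (r : 'I_4) : quat :=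
  Quat (if val r == 0%N then 1 else 0) (if val r == 1%N then 1 else 0)
       (if val r == 2%N then 1 else 0) (if val r == 3%N then 1 else 0).

Definition in_HoK (r : int) (a : quat) : Prop :=
  [/\ in_ring_of_int r (q0 a), in_ring_of_int r (q1 a),
      in_ring_of_int r (q2 a) & in_ring_of_int r (q3 a)].

Definition is_unit_HoK (r : int) (a : quat) : Prop :=
  in_HoK r a /\ exists b, in_HoK r b /\ qmul a b = qone /\ qmul b a = qone.

(* Main.v *)
Require Import Defs.
From HB Require Import structures.
From mathcomp Require Import all_boot all_order all_algebra all_field.
From mathcomp Require Import zify ring lra.
Import Order.TTheory GRing.Theory Num.Theory.
Local Open Scope ring_scope.

Definition qnorm (a : quat) : algC := q0 a ^+ 2 + q1 a ^+ 2 + q2 a ^+ 2 + q3 a ^+ 2.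
Definition qconj (a : quat) : quat := Quat (q0 a) (- q1 a) (- q2 a) (- q3 a).

Lemma qnormM a b : qnorm (qmul a b) = qnorm a * qnorm b.
Proof. case: a b => [a0 a1 a2 a3] [b0 b1 b2 b3]; rewrite /qnorm /=; ring. Qed.

Lemma qnorm1 : qnorm qone = 1.
Proof. by rewrite /qnorm /= expr1n !expr0n /= !addr0. Qed.

Lemma qmul_conj a : qnorm a = 1 -> qmul a (qconj a) = qone /\ qmul (qconj a) a = qone.
Proof.
case: a => [a0 a1 a2 a3]; rewrite /qnorm /qmul /qone /= => h.
split; congr Quat; (try rewrite -h); ring.
Qed.

Lemma qnorm3 (a b c : algC) (x y z : 'I_4) : x != y -> x != z -> y != z ->
  qnorm (qadd (qscale a (qbasis x)) (qadd (qscale b (qbasis y)) (qscale c (qbasis z))))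
  = a ^+ 2 + b ^+ 2 + c ^+ 2.
Proof.
case: x => [[|[|[|[|x]]]] hx] //; case: y => [[|[|[|[|y]]]] hy] //;
case: z => [[|[|[|[|z]]]] hz] // => _ _ _; rewrite /qnorm /=; ring.
Qed.
Definition cpair (t : algC) (z w : algC) :=
  exists a b : rat, z = ratr a + ratr b * t /\ w = ratr a - ratr b * t.

Lemma cpairD t z1 w1 z2 w2 : cpair t z1 w1 -> cpair t z2 w2 -> cpair t (z1 + z2) (w1 + w2).
Proof.
move=> [a1 [b1 [-> ->]]] [a2 [b2 [-> ->]]]; exists (a1 + a2), (b1 + b2).
rewrite !rmorphD /=; split; ring.
Qed.

Lemma cpairM {T : rat} {t z1 w1 z2 w2} : t ^+ 2 = ratr T ->
  cpair t z1 w1 -> cpair t z2 w2 -> cpair t (z1 * z2) (w1 * w2).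
Proof.
move=> ht [a1 [b1 [-> ->]]] [a2 [b2 [-> ->]]]; exists (a1 * a2 + b1 * b2 * T), (a1 * b2 + b1 * a2).
rewrite !rmorphD !rmorphM /= -ht; split; ring.
Qed.

Lemma cpairC t c : cpair t (ratr c) (ratr c).
Proof. by exists c, 0; rewrite rmorph0 mul0r addr0 subr0. Qed.

Lemma conj_Aint (T : rat) (t : algC) (a b : rat) : t ^+ 2 = ratr T ->
  (forall a b : rat, ratr a + ratr b * t = 0 -> b = 0) ->
  ratr a + ratr b * t \in Aint -> ratr a - ratr b * t \in Aint.
Proof.
move=> ht hirr hA.
have [p0 [Dp mon] _] := minCpolyP (ratr a + ratr b * t).
apply: (@root_monic_Aint (minCpoly (ratr a + ratr b * t))); last first.
- exact: hA.
- exact: minCpoly_monic.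
have hroot := root_minCpoly (ratr a + ratr b * t).
have : cpair t (minCpoly (ratr a + ratr b * t)).[ratr a + ratr b * t]
              (minCpoly (ratr a + ratr b * t)).[ratr a - ratr b * t].
  rewrite Dp !horner_coef; apply: big_ind2.
  - by have := cpairC t 0; rewrite rmorph0.
  - by move=> ? ? ? ?; apply: cpairD.
  move=> i _; rewrite coef_map /=. apply: (cpairM ht); first exact: cpairC.
  elim: (nat_of_ord i) => [|k IH]; first by rewrite !expr0; have := cpairC t 1; rewrite rmorph1.
  rewrite !exprS; apply: (cpairM ht) => //; by exists a, b.
move=> [al [be [h1 h2]]].
move/rootP: hroot; rewrite h1 => h0.
have hb := hirr _ _ h0; move: h0; rewrite hb rmorph0 mul0r addr0 => ha.
by apply/rootP; rewrite h2 hb ha rmorph0 mul0r subr0.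
Qed.
Lemma split2 (k : int) : exists a, k = 2 * a \/ k = 2 * a + 1.
Proof.
have := divz_eq k 2. have := modz_ge0 k (isT : (2:int) != 0). have := ltz_pmod k (isT : (0:int) < 2).
move: (k %/ 2)%Z (k %% 2)%Z => a r h1 h2 h3. exists a. lia.
Qed.

Lemma sqrt_Aint (k : int) : sqrtC (k%:~R : algC) \in Aint.
Proof.
apply: (@root_monic_Aint ('X^2 - (k%:~R)%:P)).
- by rewrite /root !hornerE sqrtCK subrr.
- by rewrite monicXnsubC.
- by rewrite polyOverXnsubC rpred_int.
Qed.

Lemma irr2d (d : nat) (a b : rat) : odd d ->
  ratr a + ratr b * sqrtC ((2 * d)%N%:R : algC) = 0 -> b = 0.
Proof.
move=> hodd h; apply/eqP; apply: contraT => hb.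
set t := sqrtC _ in h.
have ht : t = - ratr a / ratr b.
  apply: (mulIf (x := ratr b)); first by rewrite fmorph_eq0.
  rewrite divfK ?fmorph_eq0 // mulrC. by apply/eqP; rewrite -addr_eq0 addrC h.
have tC : t \in Crat by rewrite ht rpredM ?rpredN ?rpredV ?Crat_rat.
have tA : t \in Aint by have := sqrt_Aint ((2 * d)%N); rewrite /t.
have /intrP [k hk] := Cint_rat_Aint tC tA.
have t2 : t ^+ 2 = (2 * d)%N%:R by rewrite sqrtCK.
rewrite hk -rmorphXn /= in t2.
have : k ^+ 2 = (2 * d)%N%:Z by apply: (@intr_inj algC); rewrite t2.
have [q hq] : exists q, d = (2 * q + 1)%N by exists d./2; rewrite -{1}(odd_double_half d) hodd; lia.
rewrite hq.
have [e [->|->]] := split2 k; lia.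
Qed.

Lemma nz_core (p m dz : int) (q : nat) : dz = 8 * q%:Z + 7 ->
  let n := p ^+ 2 + (1 - p) ^+ 2 - m ^+ 2 * dz in
  n <> -1 /\ n <> 0.
Proof.
move=> -> n; rewrite /n.
have [a [->|->]] := split2 p; have [b [->|->]] := split2 m; split; nia.
Qed.

Lemma oK_int r (k : int) : in_ring_of_int r k%:~R.
Proof. split; last exact: Aint_int. by exists k%:~R, 0; rewrite ratr_int rmorph0 mul0r addr0. Qed.

Lemma oK_sqrt r (k : int) : in_ring_of_int r (k%:~R * sqrtC r%:~R).
Proof.
split; last by rewrite rpredM ?Aint_int ?sqrt_Aint.
by exists 0, k%:~R; rewrite ratr_int rmorph0 add0r.
Qed.

Lemma oK_add r x y : in_ring_of_int r x -> in_ring_of_int r y -> in_ring_of_int r (x + y).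
Proof.
move=> [[a [b ->]] hx] [[c [e ->]] hy]; split; last exact: rpredD.
by exists (a + c), (b + e); rewrite !rmorphD /=; ring.
Qed.

Lemma oK_opp r x : in_ring_of_int r x -> in_ring_of_int r (- x).
Proof.
move=> [[a [b ->]] hx]; split; last by rewrite rpredN.
by exists (- a), (- b); rewrite !rmorphN /=; ring.
Qed.

Lemma oK_if r x (c : bool) : in_ring_of_int r x -> in_ring_of_int r (x * (if c then 1 else 0)).
Proof. by case: c; rewrite ?mulr1 ?mulr0 // => _; exact: (oK_int r 0). Qed.

Lemma int_unit (n : int) (z : algC) : z \in Aint -> n%:~R * z = 1 -> n = 1 \/ n = -1.
Proof.
move=> zA h.
have n0 : (n%:~R : algC) != 0 by apply: contra_eqN h => /eqP ->; rewrite mul0r eq_sym oner_eq0.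
have ez : z = (n%:~R)^-1 by apply: (mulfI n0); rewrite h mulfV.
have zC : z \in Crat by rewrite ez rpredV rpred_int.
have /intrP [k hk] := Cint_rat_Aint zC zA.
have : n * k = 1 by apply: (@intr_inj algC); rewrite intrM -hk h.
rewrite mulrC => /intUnitRing.unitzPl; lia.
Qed.

Theorem mainTheorem16 (d : nat) (p m : int) (xi psi phi : 'I_4) :
  (0 < d)%N -> squarefree d -> (d %% 8)%N = 7%N ->
  xi != psi -> xi != phi -> psi != phi ->
  is_unit_HoK (- (d%:Z))
    (qadd (qscale (m%:~R * sqrtC (- (d%:R))) (qbasis xi))
          (qadd (qscale (p%:~R) (qbasis psi)) (qscale ((1 - p)%:~R) (qbasis phi))))
  <->
  is_unit_oF (2 * d%:Z) ((2 * p - 1)%:~R + m%:~R * sqrtC ((2 * d)%N%:R)).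
Proof.
move=> d0 _ d8 hxy hxz hyz.
have es : (- (d%:R) : algC) = (- d%:Z)%:~R by rewrite rmorphN.
have et : ((2 * d)%N%:R : algC) = (2 * d%:Z)%:~R by [].
rewrite es et.
set s := sqrtC _. set t := sqrtC _.
have hs : s ^+ 2 = - (d%:Z)%:~R by rewrite sqrtCK rmorphN.
have ht : t ^+ 2 = (2 * d%:Z)%:~R by rewrite sqrtCK.
have [q hdq] : exists q : nat, d%:Z = 8 * q%:Z + 7 by exists (d %/ 8)%N; have := divn_eq d 8; lia.
have hodd : odd d by rewrite (divn_eq d 8) d8 oddD oddM andbF.
set n := p ^+ 2 + (1 - p) ^+ 2 - m ^+ 2 * d%:Z.
have [nm1 n0] := @nz_core p m _ _ hdq.
set u := qadd _ _.
have hN : qnorm u = n%:~R.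
  rewrite /u qnorm3 // exprMn hs /n.
  by rewrite !expr2 !(intrD, intrB, intrM); ring.
have oKs : in_ring_of_int (- d%:Z) (m%:~R * s) by exact: oK_sqrt.
have uin : in_HoK (- d%:Z) u.
  by split; rewrite /=; apply: oK_add; try apply: oK_add; apply: oK_if => //; apply: oK_int.
have e_def : (2 * p - 1) ^+ 2 - m ^+ 2 * (2 * d%:Z) = 2 * n - 1 by rewrite /n; ring.
have eps_conj : ((2 * p - 1)%:~R + m%:~R * t) * ((2 * p - 1)%:~R - m%:~R * t)
    = ((2 * p - 1) ^+ 2 - m ^+ 2 * (2 * d%:Z))%:~R.
  have -> : ((2 * p - 1)%:~R + m%:~R * t) * ((2 * p - 1)%:~R - m%:~R * t)
     = (2 * p - 1)%:~R ^+ 2 - m%:~R ^+ 2 * t ^+ 2 by ring.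
  by rewrite ht !expr2 !(intrD, intrB, intrM); ring.
split.
- case=> [_ [v [vin [uv _]]]].
  have hn1 : n = 1.
    have Nv : n%:~R * qnorm v = 1 by rewrite -hN -qnormM uv qnorm1.
    have vA : qnorm v \in Aint.
      by case: vin => [[_ ?] [_ ?] [_ ?] [_ ?]]; rewrite /qnorm !rpredD ?rpredX.
    by case: (@int_unit _ _ vA Nv) => // hn; exfalso; exact: nm1 hn.
  split.
    split; last by rewrite rpredD ?Aint_int // rpredM ?Aint_int ?sqrt_Aint.
    by exists (2 * p - 1)%:~R, m%:~R; rewrite !ratr_int.
  exists ((2 * p - 1)%:~R - m%:~R * t); split.
    split; last by rewrite rpredB ?Aint_int // rpredM ?Aint_int ?sqrt_Aint.
    by exists (2 * p - 1)%:~R, (- m)%:~R; rewrite !ratr_int intrN mulNr.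
  by rewrite eps_conj e_def hn1.
- case=> [[_ eA] [y [[[a [b ey]] yA] hy]]].
  rewrite -/t in ey.
  have htT : t ^+ 2 = ratr ((2 * d%:Z)%:~R) by rewrite ratr_int.
  have irr : forall a b : rat, ratr a + ratr b * t = 0 -> b = 0.
    by move=> a' b'; exact: irr2d hodd.
  have h0 : ratr ((2 * p - 1)%:~R * a + m%:~R * b * (2 * d%:Z)%:~R - 1)
           + ratr ((2 * p - 1)%:~R * b + m%:~R * a) * t = 0.
    have ht2 : (1 + 1) * d%:~R = t ^+ 2 by rewrite ht intrM; ring.
    rewrite !(rmorphB, rmorphD, rmorphM) /= !ratr_int rmorph1 ht2.
    transitivity (((2 * p - 1)%:~R + m%:~R * t) * y - 1); last by rewrite hy subrr.
    rewrite ey; ring.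
  have hb := irr _ _ h0.
  have yA' : ratr a - ratr b * t \in Aint.
    by apply: (@conj_Aint _ _ a b htT irr); rewrite -ey.
  have hc : ((2 * p - 1)%:~R - m%:~R * t) * (ratr a - ratr b * t) = 1.
    have -> : ((2 * p - 1)%:~R - m%:~R * t) * (ratr a - ratr b * t)
        = ((2 * p - 1)%:~R + m%:~R * t) * y
          - 2 * ratr ((2 * p - 1)%:~R * b + m%:~R * a) * t.
      by rewrite ey !(rmorphB, rmorphD, rmorphM) /= !ratr_int; ring.
    by rewrite hy hb rmorph0 mulr0 mul0r subr0.
  have he : ((2 * p - 1) ^+ 2 - m ^+ 2 * (2 * d%:Z))%:~R * (y * (ratr a - ratr b * t)) = 1.
    rewrite -eps_conj.
    have -> : ((2 * p - 1)%:~R + m%:~R * t) * ((2 * p - 1)%:~R - m%:~R * t) *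
              (y * (ratr a - ratr b * t))
            = (((2 * p - 1)%:~R + m%:~R * t) * y) *
              (((2 * p - 1)%:~R - m%:~R * t) * (ratr a - ratr b * t)) by ring.
    by rewrite hy hc mulr1.
  have hn1 : n = 1.
    case: (@int_unit _ _ (rpredM yA yA') he); rewrite e_def => hh.
      lia.
    by exfalso; have hn : n = 0 by lia; exact: n0 hn.
  split; first exact: uin.
  exists (qconj u); split.
    case: uin => g0 g1 g2 g3; split; rewrite [qconj u]/qconj /=; [exact: g0 | apply: oK_opp ..]; assumption.
  by apply: qmul_conj; rewrite hN hn1.
Qed.
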